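(* Let $P\subseteq\{\text{monotonic},\text{topped},\text{cufi}\}$ and let $\mathbf{L}_P$ be the least predicate modal logic having all the properties in $P$. Then for every formula $\varphi$: $\varphi\in\mathbf{L}_P$ if and only if $Z\models\varphi$ for every neighborhood frame $Z$ having all the properties in $P$ (models on such frames having constant domains). In particular (for $P=\emptyset$), the least predicate modal logic is sound and complete with respect to the class of all neighborhood frames with constant domains.
   Context: Language: countable set $\mathsf{V}$ of variables, $\top,\bot$, $\land,\neg$, $\forall$, countably many $n$-ary predicate symbols for each $n\in\mathbb{N}$, and $\Box$. A predicate modal logic is a set of formulas containing all theorems of classical predicate logic, closed under substitution, modus ponens, generalization, and the rule $\varphi\equiv\psi\in\mathbf{L}\Rightarrow\Box\varphi\equiv\Box\psi\in\mathbf{L}$. It is monotonic if it contains $\Box(p\land q)\supset\Box p\land\Box q$, topped if it contains $\Box\top$, cufi if it contains $\Box p\land\Box q\supset\Box(p\land q)$. A neighborhood frame is $\langle C,\mathcal{V}\rangle$ with $C\ne\emptyset$, $\mathcal{V}:C\to\mathcal{P}(\mathcal{P}(C))$; monotonic if each $\mathcal{V}(c)$ is upward closed under $\subseteq$, topped if $C\in\mathcal{V}(c)$ for all $c$, cufi if each $\mathcal{V}(c)$ is closed under non-empty finite intersections. A model on $Z=\langle C,\mathcal{V}\rangle$ adds a non-empty domain $\mathcal{D}$ and $\mathcal{I}(c,P)\subseteq\mathcal{D}^n$; truth sets under assignments $\mathcal{A}:\mathsf{V}\to\mathcal{D}$ are classical, with $\forall$ as intersection over $x$-variants and $c\in\|\Box\varphi\|_{\mathcal{A}}$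 iff $\|\varphi\|_{\mathcal{A}}\in\mathcal{V}(c)$. $Z\models\varphi$ means $\|\varphi\|_{\mathcal{A}}=C$ for every model on $Z$ and every assignment. *)

(* Defs.v *)
From mathcomp Require Import ssreflect ssrfun ssrbool eqtype ssrnat seq tuple.

Set Implicit Arguments.
Unset Strict Implicit.
Unset Printing Implicit Defensive.

(** Variables are natural numbers, represented with de Bruijn indices:
    [FAll] binds index 0, free variable [i] is referred to as [i + d]
    under [d] binders.  The named quantifier "forall x_j" is [All j] below.
    Predicate symbols: for each arity [n], countably many symbols indexed by
    [k : nat]; [FPred n k ys] is the atom P^n_k(ys). *)
Inductive form : Type :=
| FTop : form
| FBot : form
| FPred : forall (n k : nat), n.-tuple nat -> form
| FAnd : form -> form -> form
| FNeg : form -> form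
| FAll : form -> form
| FBox : form -> form.

Definition FImp (a b : form) : form := FNeg (FAnd a (FNeg b)).
Definition FIff (a b : form) : form := FAnd (FImp a b) (FImp b a).

Definition upren (r : nat -> nat) : nat -> nat :=
  fun i => match i with 0 => 0 | S i' => S (r i') end.

Fixpoint ren (r : nat -> nat) (f : form) : form :=
  match f with
  | FTop => FTop
  | FBot => FBot
  | FPred n k ys => FPred k (map_tuple r ys)
  | FAnd a b => FAnd (ren r a) (ren r b)
  | FNeg a => FNeg (ren r a)
  | FAll a => FAll (ren (upren r) a)
  | FBox a => FBox (ren r a)
  end.

Definition All (j : nat) (f : form) : form :=
  FAll (ren (fun i => if i == j then 0 else S i) f).

(** Substitution of formulas for predicate symbols.  [sg n k] is the formula
    substituted for the n-ary symbol k; in it, variables 0..n-1 stand for the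
    n argument places and variable [n + j] stands for the (free, parameter)
    variable [j].  Parameters are never captured (de Bruijn). *)
Fixpoint psubst (sg : nat -> nat -> form) (d : nat) (f : form) : form :=
  match f with
  | FTop => FTop
  | FBot => FBot
  | FPred n k ys =>
      ren (fun i => if i < n then nth 0 ys i else i - n + d) (sg n k)
  | FAnd a b => FAnd (psubst sg d a) (psubst sg d b)
  | FNeg a => FNeg (psubst sg d a)
  | FAll a => FAll (psubst sg d.+1 a)
  | FBox a => FBox (psubst sg d a)
  end.

Definition subst (sg : nat -> nat -> form) (f : form) : form := psubst sg 0 f.

Definition scons (D : Type) (x : D) (A : nat -> D) : nat -> D :=
  fun i => match i with 0 => x | S i' => A i' end.

Fixpoint boxfree (f : form) : Prop :=
  match f with
  | FTop | FBot | FPred _ _ _ => True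
  | FAnd a b => boxfree a /\ boxfree b
  | FNeg a | FAll a => boxfree a
  | FBox _ => False
  end.

Fixpoint fo_sat (D : Type) (I : forall n : nat, nat -> n.-tuple D -> Prop)
  (A : nat -> D) (f : form) : Prop :=
  match f with
  | FTop => True
  | FBot => False
  | FPred n k ys => I n k (map_tuple A ys)
  | FAnd a b => fo_sat I A a /\ fo_sat I A b
  | FNeg a => ~ fo_sat I A a
  | FAll a => forall x : D, fo_sat I (scons x A) a
  | FBox _ => False
  end.

(** Theorems of classical predicate logic (box-free formulas valid in every
    first-order structure with non-empty domain; by Goedel completeness these
    are exactly the QC-theorems). *)
Definition QC (f : form) : Prop :=
  boxfree f /\
  forall (D : Type) (I : forall n : nat, nat -> n.-tuple D -> Prop) (A : nat -> D),
    inhabited D -> fo_sat I A f.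

Definition is_pml (L : form -> Prop) : Prop :=
  [/\ (forall f, QC f -> L f),
      (forall sg f, L f -> L (subst sg f)),
      (forall f g, L f -> L (FImp f g) -> L g),
      (forall j f, L f -> L (All j f)) &
      (forall f g, L (FIff f g) -> L (FIff (FBox f) (FBox g)))].

Definition prop_p : form := FPred 0 (@nil_tuple nat).
Definition prop_q : form := FPred 1 (@nil_tuple nat).

Definition ax_mono : form :=
  FImp (FBox (FAnd prop_p prop_q)) (FAnd (FBox prop_p) (FBox prop_q)).
Definition ax_top : form := FBox FTop.
Definition ax_cufi : form :=
  FImp (FAnd (FBox prop_p) (FBox prop_q)) (FBox (FAnd prop_p prop_q)).

(** The property set P is encoded by three booleans (monotonic, topped, cufi). *)
Definition logic_has (bm bt bc : bool) (L : form -> Prop) : Prop :=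
  [/\ (bm -> L ax_mono), (bt -> L ax_top) & (bc -> L ax_cufi)].

Definition LP (bm bt bc : bool) (f : form) : Prop :=
  forall L : form -> Prop, is_pml L -> logic_has bm bt bc L -> L f.

Section Semantics.
Variables (C : Type) (V : C -> (C -> Prop) -> Prop).

Definition frame_monotonic : Prop :=
  forall c (X Y : C -> Prop), (forall w, X w -> Y w) -> V c X -> V c Y.
Definition frame_topped : Prop := forall c, V c (fun _ => True).
Definition frame_cufi : Prop :=
  forall c (l : seq (C -> Prop)), l <> [::] ->
    (forall i, i < size l -> V c (nth (fun _ => True) l i)) ->
    V c (fun w => forall i, i < size l -> nth (fun _ => True) l i w).

Definition frame_has (bm bt bc : bool) : Prop :=
  [/\ (bm -> frame_monotonic), (bt -> frame_topped) & (bc -> frame_cufi)].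

Fixpoint sat (D : Type) (I : C -> forall n : nat, nat -> n.-tuple D -> Prop)
  (A : nat -> D) (f : form) : C -> Prop :=
  match f with
  | FTop => fun _ => True
  | FBot => fun _ => False
  | FPred n k ys => fun c => I c n k (map_tuple A ys)
  | FAnd a b => fun c => sat I A a c /\ sat I A b c
  | FNeg a => fun c => ~ sat I A a c
  | FAll a => fun c => forall x : D, sat I (scons x A) a c
  | FBox a => fun c => V c (sat I A a)
  end.

Definition frame_valid (f : form) : Prop :=
  forall (D : Type) (I : C -> forall n : nat, nat -> n.-tuple D -> Prop) (A : nat -> D),
    inhabited D -> forall c : C, sat I A f c.
End Semantics.

(* Main.v *)
Require Import Defs.
From mathcomp Require Import ssreflect ssrfun ssrbool eqtype ssrnat seq tuple choice.
From Stdlib Require Import Classical ClassicalEpsilon FunctionalExtensionality PropExtensionality.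
Set Implicit Arguments. Unset Strict Implicit. Unset Printing Implicit Defensive.

Fixpoint bnd (f : form) : nat :=
  match f with
  | FTop | FBot => 0
  | FPred n k ys => foldr maxn 0 (map S ys)
  | FAnd a b => maxn (bnd a) (bnd b)
  | FNeg a | FBox a => bnd a
  | FAll a => (bnd a).-1
  end.

Lemma in_bnd (ys : seq nat) i : i \in ys -> i < foldr maxn 0 (map S ys).
Proof.
elim: ys => [|y ys IH] //=; rewrite in_cons => /orP [/eqP -> | /IH H].
  by rewrite leq_max ltnS leqnn.
by rewrite leq_max H orbT.
Qed.

Lemma ren_ext_bnd f r r' : (forall i, i < bnd f -> r i = r' i) -> ren r f = ren r' f.
Proof.
elim: f r r' => [| |n k ys|a IHa b IHb|a IHa|a IHa|a IHa] r r' H //=.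
- congr FPred; apply: val_inj => /=; apply/eq_in_map => i /in_bnd; exact: H.
- rewrite (IHa r r') ?(IHb r r') // => i Hi; apply: H; by rewrite /= leq_max Hi ?orbT.
- by rewrite (IHa r r').
- rewrite (IHa (upren r) (upren r')) // => -[|i] //= Hi; rewrite H //=.
  by rewrite -ltnS (leq_trans Hi) // -add1n -leq_subLR subn1.
- by rewrite (IHa r r').
Qed.

Lemma ren_ext f r r' : r =1 r' -> ren r f = ren r' f.
Proof. by move=> H; apply: ren_ext_bnd => i _; exact: H. Qed.

Lemma ren_id f r : r =1 id -> ren r f = f.
Proof.
elim: f r => [| |n k ys|a IHa b IHb|a IHa|a IHa|a IHa] r H //=.
- congr FPred; apply: val_inj => /=; rewrite (eq_map H); exact: map_id.
- by rewrite IHa // IHb.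
- by rewrite IHa.
- by rewrite IHa // => -[|i] //=; rewrite H.
- by rewrite IHa.
Qed.

Lemma ren_comp f r s : ren r (ren s f) = ren (r \o s) f.
Proof.
elim: f r s => [| |n k ys|a IHa b IHb|a IHa|a IHa|a IHa] r s //=.
- congr FPred; apply: val_inj => /=; by rewrite -map_comp.
- by rewrite IHa IHb.
- by rewrite IHa.
- by rewrite IHa; congr FAll; apply: ren_ext => -[|i].
- by rewrite IHa.
Qed.
Lemma fun_iff_eq (C : Type) (X Y : C -> Prop) : (forall c, X c <-> Y c) -> X = Y.
Proof. move=> H; apply: functional_extensionality => c; exact: propositional_extensionality. Qed.

Section Sound.
Variables (C : Type) (V : C -> (C -> Prop) -> Prop).

Lemma sat_ext D (I : C -> forall n : nat, nat -> n.-tuple D -> Prop) f A B :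
  A =1 B -> forall c, sat V I A f c <-> sat V I B f c.
Proof.
elim: f A B => [| |n k ys|a IHa b IHb|a IHa|a IHa|a IHa] A B H c //=.
- have -> : map_tuple A ys = map_tuple B ys by apply: val_inj => /=; exact: eq_map.
  by [].
- by rewrite (IHa A B) // (IHb A B).
- by rewrite (IHa A B).
- split=> Hx x; [rewrite -(IHa (scons x A)) | rewrite (IHa _ (scons x B))] => // -[|i] //=.
- by rewrite (fun_iff_eq (IHa A B H)).
Qed.

Lemma sat_ren D (I : C -> forall n : nat, nat -> n.-tuple D -> Prop) f A r :
  forall c, sat V I A (ren r f) c <-> sat V I (A \o r) f c.
Proof.
elim: f A r => [| |n k ys|a IHa b IHb|a IHa|a IHa|a IHa] A r c //=.
- have -> : map_tuple A (map_tuple r ys) = map_tuple (A \o r) ys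
    by apply: val_inj => /=; rewrite map_comp.
  by [].
- by rewrite IHa IHb.
- by rewrite IHa.
- have E : forall x, (scons x A) \o (upren r) =1 scons x (A \o r) by move=> x [|i].
  split=> Hx x; move: (Hx x); rewrite ?IHa (sat_ext _ _ (E x)) //.
- by rewrite (fun_iff_eq (IHa A r)).
Qed.
End Sound.
Section Sound2.
Variables (C : Type) (V : C -> (C -> Prop) -> Prop).

Lemma sat_psubst D (I : C -> forall n : nat, nat -> n.-tuple D -> Prop) (x0 : D)
   sg (A0 : nat -> D) f :
  forall d A, (forall j, A (j + d) = A0 j) -> forall c,
  sat V I A (psubst sg d f) c <->
  sat V (fun c n k (ds : n.-tuple D) =>
           sat V I (fun i => if i < n then nth x0 ds i else A0 (i - n)) (sg n k) c) A f c.
Proof.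
elim: f => [| |n k ys|a IHa b IHb|a IHa|a IHa|a IHa] d A HA c //=.
- rewrite sat_ren; apply: sat_ext => i /=.
  case: ifP => Hi; last by rewrite HA.
  rewrite (nth_map 0) //; by rewrite size_tuple.
- by rewrite (IHa d A HA) (IHb d A HA).
- by rewrite (IHa d A HA).
- split=> Hx x; move: (Hx x); rewrite (IHa d.+1) // => j /=; by rewrite addnS /= HA.
- by rewrite (fun_iff_eq (IHa d A HA)).
Qed.

Lemma sat_fo D (I : C -> forall n : nat, nat -> n.-tuple D -> Prop) f A c :
  boxfree f -> (sat V I A f c <-> fo_sat (I c) A f).
Proof.
elim: f A => [| |n k ys|a IHa b IHb|a IHa|a IHa|a IHa] A //=.
- by move=> [Ha Hb]; rewrite IHa // IHb.
- by move=> Ha; rewrite IHa.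
- by move=> Ha; split=> H x; [rewrite -IHa | rewrite IHa].
Qed.

Lemma sound_pml : is_pml (frame_valid V).
Proof.
split.
- move=> f [Hb Hf] D I A HD c; rewrite sat_fo //; exact: Hf.
- move=> sg f Hf D I A [x0] c; rewrite /subst (@sat_psubst D I x0 sg A f 0 A) => [|j]; last by rewrite addn0.
  by apply: Hf; exists.
- move=> f g Hf Hfg D I A HD c; move: (Hf D I A HD c) (Hfg D I A HD c) => /=.
  by case: (classic (sat V I A g c)) => //; tauto.
- move=> j f Hf D I A HD c /= x; rewrite sat_ren; exact: Hf.
- move=> f g H D I A HD c.
  have E : sat V I A f = sat V I A g.
    apply: fun_iff_eq => c'; move: (H D I A HD c') => /=.
    by case: (classic (sat V I A g c')); case: (classic (sat V I A f c')); tauto.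
  by rewrite /= E; tauto.
Qed.

Lemma sound_has bm bt bc : frame_has V bm bt bc -> logic_has bm bt bc (frame_valid V).
Proof.
case=> Hm Ht Hc; split.
- move=> /Hm HM D I A HD c /= [H1 H2]; apply: H2; split; apply: HM H1 => w /=; tauto.
- move=> /Ht HT D I A HD c /=; exact: HT.
- move=> /Hc HC D I A HD c /= [[H1 H2] H3]; apply: H3.
  set X := sat V I A prop_p; set Y := sat V I A prop_q.
  have := HC c [:: X; Y] ltac:(by []) => /= H.
  have E : (fun w => forall i, i < 2 -> nth (fun _ => True) [:: X; Y] i w) = (fun w => X w /\ Y w).
    apply: fun_iff_eq => w; split; first by move=> H'; split; [apply: (H' 0) | apply: (H' 1)].
    by move=> [? ?] [|[|i]].
  rewrite -E; apply: H => -[|[|i]] //.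
Qed.
End Sound2.

Lemma soundness bm bt bc f : LP bm bt bc f ->
  forall (C : Type) (V : C -> (C -> Prop) -> Prop),
      inhabited C -> frame_has V bm bt bc -> frame_valid V f.
Proof.
move=> H C V _ HV; apply: H; [exact: sound_pml | exact: sound_has].
Qed.
Inductive pf := PV of nat | PT | PB | PAnd of pf & pf | PNeg of pf.
Definition PImp a b := PNeg (PAnd a (PNeg b)).
Fixpoint pinst (s : seq form) (t : pf) : form :=
  match t with
  | PV k => nth FTop s k | PT => FTop | PB => FBot
  | PAnd a b => FAnd (pinst s a) (pinst s b) | PNeg a => FNeg (pinst s a) end.
Fixpoint ptemp (t : pf) : form :=
  match t with
  | PV k => FPred k (nil_tuple nat) | PT => FTop | PB => FBot
  | PAnd a b => FAnd (ptemp a) (ptemp b) | PNeg a => FNeg (ptemp a) end.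
Fixpoint peval (v : nat -> Prop) (t : pf) : Prop :=
  match t with
  | PV k => v k | PT => True | PB => False
  | PAnd a b => peval v a /\ peval v b | PNeg a => ~ peval v a end.

Definition inst (b : form) (y : nat) := ren (scons y (fun i => i)) b.

Section Compl.
Variable L : form -> Prop.
Hypothesis HL : is_pml L.

Lemma Lqc f : QC f -> L f. Proof. by case: HL => H _ _ _ _; apply: H. Qed.
Lemma Lsub sg f : L f -> L (subst sg f). Proof. by case: HL => _ H _ _ _; apply: H. Qed.
Lemma Lmp f g : L f -> L (FImp f g) -> L g. Proof. by case: HL => _ _ H _ _; apply: H. Qed.
Lemma Lgen j f : L f -> L (All j f). Proof. by case: HL => _ _ _ H _; apply: H. Qed.
Lemma Lbox f g : L (FIff f g) -> L (FIff (FBox f) (FBox g)). Proof. by case: HL => _ _ _ _ H; apply: H. Qed.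

Lemma taut t s : (forall v, peval v t) -> L (pinst s t).
Proof.
move=> Hv.
have -> : pinst s t = subst (fun n k => nth FTop s k) (ptemp t).
  rewrite /subst; elim: t {Hv} => [k| | |a IHa b IHb|a IHa] /=; rewrite -?IHa -?IHb //.
  by rewrite ren_id // => i; rewrite subn0 addn0.
apply/Lsub/Lqc; split; first by elim: t {Hv} => //= a -> b ->.
move=> D I A _; move: (Hv (fun k => I 0 k (map_tuple A (nil_tuple nat)))).
suff E : fo_sat I A (ptemp t) <-> peval (fun k => I 0 k (map_tuple A (nil_tuple nat))) t by move=> ?; apply/E.
by elim: t {Hv} => [k| | |a IHa b IHb|a IHa] /=; rewrite ?IHa ?IHb.
Qed.

Ltac ptaut := let v := fresh "v" in move=> v /=;
  case: (classic (v 0)); case: (classic (v 1)); case: (classic (v 2)); case: (classic (v 3)); tauto.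

Lemma Linst b y : L (FImp (FAll b) (inst b y)).
Proof.
pose T := FImp (FAll (FPred 0 [tuple 0])) (FPred 0 [tuple y]).
have QT : QC T.
  split => // D I A _ /= [H1 H2]; apply: H2.
  have E : map_tuple (scons (A y) A) [tuple 0] = map_tuple A [tuple y] by apply: val_inj.
  by rewrite -E.
have H := Lsub (fun _ _ => b) (Lqc QT).
suff E : subst (fun _ _ => b) T = FImp (FAll b) (inst b y) by rewrite -E.
rewrite /subst /= /inst; congr (FNeg (FAnd (FAll _) (FNeg _))).
- by apply: ren_id => -[|i] //=; rewrite subn1 addn1.
- by apply: ren_ext => -[|i] //=; rewrite subn1 addn0.
Qed.

Lemma Lgen_imp c b : L (FImp (FAll (FImp (ren S c) b)) (FImp c (FAll b))).
Proof.
pose T := FImp (FAll (FImp (FPred 0 (nil_tuple nat)) (FPred 0 [tuple 0])))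
               (FImp (FPred 0 (nil_tuple nat)) (FAll (FPred 0 [tuple 0]))).
have QT : QC T.
  split => // D I A _ /= [H1 H2]; apply: H2 => -[HP HQ]; apply: HQ => x.
  apply: NNPP => HQx; apply: (H1 x); split => //.
  have -> : map_tuple (scons x A) (nil_tuple nat) = map_tuple A (nil_tuple nat) by apply: val_inj.
  done.
pose sg := fun n (k : nat) => if n is 0 then c else b.
have H := Lsub sg (Lqc QT).
suff E : subst sg T = FImp (FAll (FImp (ren S c) b)) (FImp c (FAll b)) by rewrite -E.
rewrite /subst /=.
congr (FNeg (FAnd (FAll (FNeg (FAnd _ (FNeg _)))) (FNeg (FNeg (FAnd _ (FNeg (FAll _))))))).
- by apply: ren_ext => i /=; rewrite subn0 addn1.
- by apply: ren_id => -[|i] //=; rewrite subn1 addn1.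
- by apply: ren_id => i /=; rewrite subn0 addn0.
- by apply: ren_id => -[|i] //=; rewrite subn1 addn1.
Qed.

Definition conj (l : seq form) := foldr FAnd FTop l.
Definition incons (l : seq form) := L (FNeg (conj l)).

Lemma conj_in l x : List.In x l -> L (FImp (conj l) x).
Proof.
elim: l => [|y l IH] //= [->|/IH H].
- by apply: (@taut (PImp (PAnd (PV 0) (PV 1)) (PV 0)) [:: x; conj l]); ptaut.
- apply: (Lmp H); by apply: (@taut (PImp (PImp (PV 1) (PV 2)) (PImp (PAnd (PV 0) (PV 1)) (PV 2))) [:: y; conj l; x]); ptaut.
Qed.

Lemma conj_sub l l' : (forall x, List.In x l -> List.In x l') -> L (FImp (conj l') (conj l)).
Proof.
elim: l => [|y l IH] /= Hs.
- by apply: (@taut (PImp (PV 0) PT) [:: conj l']); ptaut.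
- have H1 := conj_in (Hs y (or_introl erefl)).
  have H2 := IH (fun x Hx => Hs x (or_intror Hx)).
  apply: (Lmp H2); apply: (Lmp H1).
  by apply: (@taut (PImp (PImp (PV 0) (PV 1)) (PImp (PImp (PV 0) (PV 2)) (PImp (PV 0) (PAnd (PV 1) (PV 2))))) [:: conj l'; y; conj l]); ptaut.
Qed.

Lemma incons_sub l l' : incons l -> (forall x, List.In x l -> List.In x l') -> incons l'.
Proof.
move=> H /conj_sub H2; apply: (Lmp H2); apply: (Lmp H).
by apply: (@taut (PImp (PNeg (PV 0)) (PImp (PImp (PV 1) (PV 0)) (PNeg (PV 1)))) [:: conj l; conj l']); ptaut.
Qed.

Fixpoint encode (f : form) : GenTree.tree nat :=
  match f with
  | FTop => GenTree.Node 0 [::]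
  | FBot => GenTree.Node 1 [::]
  | FPred n k ys => GenTree.Node 2 [:: GenTree.Leaf n; GenTree.Leaf k; GenTree.Node 0 (map (@GenTree.Leaf nat) ys)]
  | FAnd a b => GenTree.Node 3 [:: encode a; encode b]
  | FNeg a => GenTree.Node 4 [:: encode a]
  | FAll a => GenTree.Node 5 [:: encode a]
  | FBox a => GenTree.Node 6 [:: encode a]
  end.

Lemma encode_inj : injective encode.
Proof.
have Li : injective (@GenTree.Leaf nat) by move=> x y [].
elim=> [| |n k ys|a IHa b IHb|a IHa|a IHa|a IHa] [| |n' k' ys'|a' b'|a'|a'|a'] //=.
- case=> En Ek; subst n' k' => /(inj_map Li) Eys.
  by congr FPred; apply: val_inj.
- by case=> /IHa -> /IHb ->.
- by case=> /IHa ->.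
- by case=> /IHa ->.
- by case=> /IHa ->.
Qed.

Definition code (f : form) : nat := pickle (encode f).
Definition enum (n : nat) : form := epsilon (inhabits FTop) (fun f => code f = n).
Lemma enum_code f : enum (code f) = f.
Proof.
have := @epsilon_spec _ (inhabits FTop) (fun g => code g = code f) (ex_intro _ f erefl).
rewrite -/(enum (code f)) /code => /(pcan_inj (@pickleK _)) /encode_inj; exact.
Qed.

Definition bnds (l : seq form) := foldr (fun f m => maxn (bnd f) m) 0 l.
Definition wit (f : form) : option form :=
  match f with FNeg (FAll b) => Some b | _ => None end.
Lemma witP f b : wit f = Some b -> f = FNeg (FAll b).
Proof. by case: f => // -[] // ? [->]. Qed.

Definition step (en : nat -> form) (n : nat) (l : seq form) : seq form :=
  let phi := en n in
  if excluded_middle_informative (incons (phi :: l)) then FNeg phi :: l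
  else match wit phi with
       | Some b => FNeg (inst b (bnds (phi :: l))) :: phi :: l
       | None => phi :: l end.

Lemma step_sub en n l x : List.In x l -> List.In x (step en n l).
Proof.
rewrite /step; case: excluded_middle_informative => _ /=; first by tauto.
case: (wit _) => /=; tauto.
Qed.

Lemma bnd_conj l : bnd (conj l) = bnds l.
Proof. by elim: l => //= x l ->. Qed.

Lemma all_fresh c b y : bnd c <= y -> (bnd b).-1 <= y ->
  All y (FImp c (inst b y)) = FAll (FImp (ren S c) b).
Proof.
move=> Hc Hb; rewrite /All /FImp /= /inst ren_comp.
congr (FAll (FNeg (FAnd _ (FNeg _)))).
- apply: (@ren_ext_bnd c) => i Hi; case: eqP => // E; subst i.
  by move: (leq_trans Hi Hc); rewrite ltnn.
- transitivity (ren id b); last by apply: ren_id.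
  apply: (@ren_ext_bnd b) => -[|i] Hi /=; first by rewrite eqxx.
  case: eqP => // E; subst i; exfalso.
  have : y < (bnd b).-1 by rewrite -ltnS (leq_trans Hi) // -add1n -leq_subLR subn1.
  by rewrite ltnNge Hb.
Qed.

Lemma step_cons en n l : ~ incons l -> ~ incons (step en n l).
Proof.
rewrite /step; set phi := en n => Hl.
case: excluded_middle_informative => Hi /=.
- move=> Hn; apply: Hl; apply: (Lmp Hn); apply: (Lmp Hi); rewrite /incons /=.
  by apply: (@taut (PImp (PNeg (PAnd (PV 0) (PV 1))) (PImp (PNeg (PAnd (PNeg (PV 0)) (PV 1))) (PNeg (PV 1)))) [:: phi; conj l]); ptaut.
- case E: (wit phi) => [b|] //.
  move: (witP E) => Ephi.
  set y := bnds (phi :: l).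
  move=> Hn; apply: Hi.
  have H1 : L (FImp (conj (phi :: l)) (inst b y)).
    apply: (Lmp Hn); rewrite /incons /=.
    by apply: (@taut (PImp (PNeg (PAnd (PNeg (PV 0)) (PV 1))) (PImp (PV 1) (PV 0))) [:: inst b y; conj (phi :: l)]); ptaut.
  have H2 := Lgen y H1.
  rewrite all_fresh in H2; last first.
  - by rewrite /y /= Ephi /= leq_max leqnn.
  - by rewrite bnd_conj leqnn.
  have H3 := Lmp H2 (Lgen_imp _ _).
  move: H3; rewrite /incons /= Ephi => H3; apply: (Lmp H3).
  by apply: (@taut (PImp (PImp (PAnd (PNeg (PV 0)) (PV 1)) (PV 0)) (PNeg (PAnd (PNeg (PV 0)) (PV 1)))) [:: FAll b; conj l]); ptaut.
Qed.

Section Lind.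
Variables (en : nat -> form) (cd : form -> nat).
Hypothesis Hen : forall f, en (cd f) = f.
Fixpoint GG (th : form) (n : nat) : seq form :=
  match n with 0 => [:: th] | S n => step en n (GG th n) end.

Lemma GG_mono th n m x : n <= m -> List.In x (GG th n) -> List.In x (GG th m).
Proof.
elim: m => [|m IH]; first by rewrite leqn0 => /eqP ->.
rewrite leq_eqVlt => /orP [/eqP -> //| Hlt] Hx /=.
by apply: step_sub; apply: IH.
Qed.

Definition world (G : form -> Prop) :=
  [/\ (forall l, (forall x, List.In x l -> G x) -> ~ incons l),
      (forall phi, G phi \/ G (FNeg phi)) &
      (forall b, G (FNeg (FAll b)) -> exists y, G (FNeg (inst b y)))].

Lemma lindenbaum0 th : ~ incons [:: th] -> exists G, world G /\ G th.
Proof.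
move=> Hth; pose G := fun x => exists n, List.In x (GG th n).
have Gc : forall n, ~ incons (GG th n) by elim=> [|n IH] //=; exact: step_cons.
have Gcons : forall l, (forall x, List.In x l -> G x) -> ~ incons l.
  move=> l Hl.
  have [n Hn] : exists n, forall x, List.In x l -> List.In x (GG th n).
    elim: l Hl => [|x l IH] Hl; first by exists 0.
    have [n1 Hn1] := Hl x (or_introl erefl).
    have [n2 Hn2] := IH (fun z Hz => Hl z (or_intror Hz)).
    exists (maxn n1 n2) => z /= [<-|Hz].
    + by apply: (GG_mono (n := n1)) => //; rewrite leq_maxl.
    + by apply: (GG_mono (n := n2)); [rewrite leq_maxr | apply: Hn2].
  by move=> Hi; apply: (Gc n); apply: incons_sub Hi Hn.
exists G; split; last by exists 0; left.
split => //.
- move=> phi; have := erefl (GG th (cd phi).+1); rewrite {2}/GG -/GG /step Hen.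
  case: excluded_middle_informative => Hi.
  + by move=> E; right; exists (cd phi).+1; rewrite E; left.
  + case: (wit phi) => [b|] E; left; exists (cd phi).+1; rewrite E /=; tauto.
- move=> b Hb.
  have := erefl (GG th (cd (FNeg (FAll b))).+1); rewrite {2}/GG -/GG /step Hen.
  case: excluded_middle_informative => Hi E.
  + exfalso; apply: (Gcons [:: FNeg (FAll b); FNeg (FNeg (FAll b))]).
    * move=> x [<-|[<-|[]]]; first by [].
      exists (cd (FNeg (FAll b))).+1; rewrite E; by left.
    * rewrite /incons /=.
      by apply: (@taut (PNeg (PAnd (PNeg (PV 0)) (PAnd (PNeg (PNeg (PV 0))) PT))) [:: FAll b]); ptaut.
  + eexists; exists (cd (FNeg (FAll b))).+1; rewrite E; by left.
Qed.
End Lind.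

Lemma lindenbaum th : ~ incons [:: th] -> exists G, world G /\ G th.
Proof. exact: (lindenbaum0 enum_code). Qed.

Section World.
Variable G : form -> Prop.
Hypothesis HG : world G.

Lemma W_thm phi : L phi -> G phi.
Proof.
case: HG => Hc Hm _ H; case: (Hm phi) => // Hn; exfalso.
apply: (Hc [:: FNeg phi]); first by move=> x /= [<-|[]].
apply: (Lmp H); rewrite /incons /=.
by apply: (@taut (PImp (PV 0) (PNeg (PAnd (PNeg (PV 0)) PT))) [:: phi]); ptaut.
Qed.

Lemma W_mp a b : G a -> G (FImp a b) -> G b.
Proof.
case: HG => Hc Hm _ Ha Hab; case: (Hm b) => // Hn; exfalso.
apply: (Hc [:: a; FImp a b; FNeg b]); first by move=> x /= [<-|[<-|[<-|[]]]].
rewrite /incons /=.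
by apply: (@taut (PNeg (PAnd (PV 0) (PAnd (PImp (PV 0) (PV 1)) (PAnd (PNeg (PV 1)) PT)))) [:: a; b]); ptaut.
Qed.

Lemma W_not a : G (FNeg a) <-> ~ G a.
Proof.
case: HG => Hc Hm _; split.
- move=> Hn Ha; apply: (Hc [:: a; FNeg a]); first by move=> x /= [<-|[<-|[]]].
  rewrite /incons /=.
  by apply: (@taut (PNeg (PAnd (PV 0) (PAnd (PNeg (PV 0)) PT))) [:: a]); ptaut.
- by case: (Hm a).
Qed.

Lemma W_and a b : G (FAnd a b) <-> G a /\ G b.
Proof.
split.
- move=> H; split; apply: (W_mp H); apply: W_thm.
  + by apply: (@taut (PImp (PAnd (PV 0) (PV 1)) (PV 0)) [:: a; b]); ptaut.
  + by apply: (@taut (PImp (PAnd (PV 0) (PV 1)) (PV 1)) [:: a; b]); ptaut.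
- move=> [Ha Hb]; apply: (W_mp Hb); apply: (W_mp Ha); apply: W_thm.
  by apply: (@taut (PImp (PV 0) (PImp (PV 1) (PAnd (PV 0) (PV 1)))) [:: a; b]); ptaut.
Qed.

Lemma W_top : G FTop.
Proof. by apply: W_thm; apply: (@taut PT [::]); ptaut. Qed.

Lemma W_bot : ~ G FBot.
Proof.
case: HG => Hc _ _ Hb; apply: (Hc [:: FBot]); first by move=> x /= [<-|[]].
by rewrite /incons /=; apply: (@taut (PNeg (PAnd PB PT)) [::]); ptaut.
Qed.

Lemma W_all b : G (FAll b) <-> forall y, G (inst b y).
Proof.
split; first by move=> H y; apply: (W_mp H); apply: W_thm; apply: Linst.
move=> H; apply: NNPP => Hn.
case: HG => _ Hm Hs; case: (Hm (FAll b)) => // /Hs [y Hy].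
by move/W_not: Hy; apply.
Qed.

Lemma W_iff a b : G (FIff a b) -> (G a <-> G b).
Proof.
move/W_and => [H1 H2]; split => H; [exact: W_mp H H1 | exact: W_mp H H2].
Qed.
End World.

Lemma derive_worlds a b :
  (forall G, world G -> G a -> G b) -> L (FImp a b).
Proof.
move=> H; apply: NNPP => Hn.
have [G [HG Gt]] : exists G, world G /\ G (FNeg (FImp a b)).
  apply: lindenbaum => Hi; apply: Hn; apply: (Lmp Hi); rewrite /incons /=.
  by apply: (@taut (PImp (PNeg (PAnd (PNeg (PImp (PV 0) (PV 1))) PT)) (PImp (PV 0) (PV 1))) [:: a; b]); ptaut.
move/(W_not HG): Gt; apply.
case: (classic (G a)) => Ha.
- apply: (W_mp HG (H G HG Ha)); apply: (W_thm HG).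
  by apply: (@taut (PImp (PV 1) (PImp (PV 0) (PV 1))) [:: a; b]); ptaut.
- move/(W_not HG): Ha => Ha; apply: (W_mp HG Ha); apply: (W_thm HG).
  by apply: (@taut (PImp (PNeg (PV 0)) (PImp (PV 0) (PV 1))) [:: a; b]); ptaut.
Qed.

Definition sg2 (x y : form) := fun (n k : nat) => if k is 0 then x else y.

Lemma inst_mono x y : L ax_mono -> L (FImp (FBox (FAnd x y)) (FAnd (FBox x) (FBox y))).
Proof.
move=> /(Lsub (sg2 x y)); rewrite /subst /=.
suff E : forall z, ren (fun i => if i < 0 then nth 0 (nil_tuple nat) i else i - 0 + 0) z = z by rewrite !E.
by move=> z; apply: ren_id => i; rewrite subn0 addn0.
Qed.

Lemma inst_cufi x y : L ax_cufi -> L (FImp (FAnd (FBox x) (FBox y)) (FBox (FAnd x y))).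
Proof.
move=> /(Lsub (sg2 x y)); rewrite /subst /=.
suff E : forall z, ren (fun i => if i < 0 then nth 0 (nil_tuple nat) i else i - 0 + 0) z = z by rewrite !E.
by move=> z; apply: ren_id => i; rewrite subn0 addn0.
Qed.

Lemma mono_rule x y : L ax_mono -> L (FImp x y) -> L (FImp (FBox x) (FBox y)).
Proof.
move=> Hm H.
have H1 : L (FIff x (FAnd x y)).
  apply: (Lmp H).
  by apply: (@taut (PImp (PImp (PV 0) (PV 1)) (PAnd (PImp (PV 0) (PAnd (PV 0) (PV 1))) (PImp (PAnd (PV 0) (PV 1)) (PV 0)))) [:: x; y]); ptaut.
have H2 := Lbox H1.
have H3 := inst_mono x y Hm.
apply: (Lmp H3); apply: (Lmp H2).
by apply: (@taut (PImp (PAnd (PImp (PV 0) (PV 1)) (PImp (PV 1) (PV 0)))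
                 (PImp (PImp (PV 1) (PAnd (PV 0) (PV 2))) (PImp (PV 0) (PV 2))))
              [:: FBox x; FBox (FAnd x y); FBox y]); ptaut.
Qed.

Lemma iff_intro x y : L (FImp x y) -> L (FImp y x) -> L (FIff x y).
Proof.
move=> H1 H2; apply: (Lmp H2); apply: (Lmp H1).
by apply: (@taut (PImp (PImp (PV 0) (PV 1)) (PImp (PImp (PV 1) (PV 0)) (PAnd (PImp (PV 0) (PV 1)) (PImp (PV 1) (PV 0))))) [:: x; y]); ptaut.
Qed.

Definition CW := {G : form -> Prop | world G}.
Definition CV (bm : bool) (w : CW) (X : CW -> Prop) : Prop :=
  exists chi, sval w (FBox chi) /\
    (if bm then forall u : CW, sval u chi -> X u else forall u : CW, X u <-> sval u chi).
Definition CI (w : CW) (n k : nat) (ds : n.-tuple nat) : Prop := sval w (FPred k ds).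

Lemma truth (bm : bool) (Hm : bm -> L ax_mono) (a : form) : forall (s : nat -> nat) (w : CW),
  sat (CV bm) CI s a w <-> sval w (ren s a).
Proof.
elim: a => [| |n k ys|a IHa b IHb|a IHa|a IHa|a IHa] s w /=.
- by split => // _; apply: W_top (svalP w).
- by split => // /(W_bot (svalP w)).
- by [].
- by rewrite IHa IHb (W_and (svalP w)).
- by rewrite IHa (W_not (svalP w)).
- rewrite (W_all (svalP w)); split=> H x; move: (H x); rewrite IHa /inst ren_comp;
    by rewrite (@ren_ext a (scons x (fun i => i) \o upren s) (scons x s)) // => -[|i].
- rewrite /CV; case: bm Hm IHa => Hm IHa; split.
  + move=> [chi [Hb Hx]]; apply: (W_mp (svalP w) Hb); apply: (W_thm (svalP w)).
    apply: mono_rule; first exact: Hm.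
    by apply: derive_worlds => G HG Hc; apply: ((IHa s (exist _ G HG)).1); apply: Hx.
  + by move=> H; exists (ren s a); split => // u /IHa.
  + move=> [chi [Hb Hx]].
    have E : L (FIff chi (ren s a)).
      apply: iff_intro; apply: derive_worlds => G HG Hc.
      * by apply/(IHa s (exist _ G HG)); apply/Hx; exact: Hc.
      * by apply/(Hx (exist _ G HG)); apply/(IHa s (exist _ G HG)); exact: Hc.
    exact: (W_iff (svalP w) (W_thm (svalP w) (Lbox E))).1 Hb.
  + by move=> H; exists (ren s a); split => // u; rewrite IHa.
Qed.

Lemma CV_ext bm w (X Y : CW -> Prop) : CV bm w X -> (forall u, X u <-> Y u) -> CV bm w Y.
Proof.
move=> [chi [Hb Hx]] E; exists chi; split => //; case: bm Hx => Hx u.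
- by rewrite -E; apply: Hx.
- by rewrite -E.
Qed.

Lemma CV_and bm w (X Y : CW -> Prop) : L ax_cufi ->
  CV bm w X -> CV bm w Y -> CV bm w (fun u => X u /\ Y u).
Proof.
move=> Hc [c1 [H1 X1]] [c2 [H2 X2]]; exists (FAnd c1 c2); split.
- apply: (W_mp (svalP w) _ (W_thm (svalP w) (inst_cufi c1 c2 Hc))).
  by apply/(W_and (svalP w)).
- case: bm X1 X2 => X1 X2 u.
  + by move/(W_and (svalP u)) => [/X1 ? /X2 ?].
  + by rewrite (W_and (svalP u)) X1 X2.
Qed.

Lemma cap_cons (T : Type) (x : T -> Prop) (l : seq (T -> Prop)) u :
  (forall i, i < size (x :: l) -> nth (fun _ => True) (x :: l) i u) <->
  x u /\ (forall i, i < size l -> nth (fun _ => True) l i u).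
Proof.
split.
- by move=> H; split; [exact: (H 0) | move=> i Hi; exact: (H i.+1)].
- by move=> [H1 H2] [|i] //= Hi; apply: H2.
Qed.

Lemma canon_has bm bt bc : logic_has bm bt bc L -> frame_has (CV bm) bm bt bc.
Proof.
case=> Hm Ht Hc; split.
- move=> bmT; rewrite /frame_monotonic bmT => w X Y HXY [chi [Hb Hx]].
  by exists chi; split => // u /Hx /HXY.
- move=> /Ht HT w; exists FTop; split; first by apply: (W_thm (svalP w)).
  by case: bm Hm => _ u //; split => // _; apply: W_top (svalP u).
- move=> /Hc HC w l; case: l => [//|x l] _.
  elim: l x => [|y l IH] x H.
  + apply: (CV_ext (X := x)); first exact: (H 0).
    by move=> u; rewrite cap_cons /=; split => // -[].
  + apply: (CV_ext (X := fun u => x u /\ (forall i, i < size (y :: l) -> nth (fun _ => True) (y :: l) i u))).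
      apply: CV_and => //; first exact: (H 0).
      by apply: IH => i Hi; apply: (H i.+1).
    by move=> u; symmetry; apply: cap_cons.
Qed.

Lemma countermodel bm bt bc f : logic_has bm bt bc L -> ~ L f ->
  exists (C : Type) (V : C -> (C -> Prop) -> Prop),
    [/\ inhabited C, frame_has V bm bt bc & ~ frame_valid V f].
Proof.
move=> Hh Hf.
have [G [HG Gt]] : exists G, world G /\ G (FNeg f).
  apply: lindenbaum => Hi; apply: Hf; apply: (Lmp Hi); rewrite /incons /=.
  by apply: (@taut (PImp (PNeg (PAnd (PNeg (PV 0)) PT)) (PV 0)) [:: f]); ptaut.
pose w : CW := exist _ G HG.
have Hm : bm -> L ax_mono by case: Hh.
exists CW, (CV bm); split; [exact: (inhabits w) | exact: canon_has | ].
move=> Hv; have := Hv nat CI (fun i => i) (inhabits 0) w.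
rewrite truth // ren_id // => Gf.
by move/(W_not HG): Gt; apply.
Qed.
End Compl.

Theorem mainTheorem9 (bm bt bc : bool) (f : form) :
  LP bm bt bc f <->
  (forall (C : Type) (V : C -> (C -> Prop) -> Prop),
      inhabited C -> frame_has V bm bt bc -> frame_valid V f).
Proof.
split; first exact: soundness.
move=> H L HL Hh; apply: NNPP => Hf.
have [C [V [HC HV Hn]]] := countermodel HL Hh Hf.
by apply: Hn; apply: H.
Qed.
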